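(* Fix a positive integer $m$. Then, as a function of $n$ (with $n\to\infty$), the domination number satisfies $\gamma(\mathcal{SR}(m,n))=\Theta(n^{m-2})$.
   Context: For positive integers $m,n$, the simplicial rook graph $\mathcal{SR}(m,n)$ is the graph whose vertices are the vectors $(a_1,\dots,a_m)\in\mathbb{N}^m$ (nonnegative integer coordinates) with $a_1+\cdots+a_m=n$, two vertices being adjacent if and only if their vectors differ in exactly two coordinates. $\gamma(G)$ denotes the domination number of a graph $G$: the minimum size of a set $D$ of vertices such that every vertex is in $D$ or adjacent to a vertex of $D$. *)

(* Defs.v *)
From mathcomp Require Import all_boot.
Set Implicit Arguments. Unset Strict Implicit. Unset Printing Implicit Defensive.

(* Ambient finite type: functions 'I_m -> {0,...,n}; a vertex of SR(m,n) is
   such a vector whose coordinates sum to n (every nonnegative integer vector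
   with coordinate sum n has all coordinates <= n, so this is all of them). *)
Definition sr_vec (m n : nat) := {ffun 'I_m -> 'I_n.+1}.

Definition sr_vertices (m n : nat) : {set sr_vec m n} :=
  [set a : sr_vec m n | \sum_(i < m) (a i : nat) == n].

Definition sr_adj (m n : nat) (a b : sr_vec m n) : bool :=
  #|[set i : 'I_m | a i != b i]| == 2.

Definition sr_dominating (m n : nat) (D : {set sr_vec m n}) : bool :=
  (D \subset sr_vertices m n) &&
  [forall v in sr_vertices m n, (v \in D) || [exists d in D, sr_adj d v]].

(* domination number: minimum size of a dominating set
   (the full vertex set is dominating, so the default value is attained) *)
Definition sr_gamma (m n : nat) : nat :=
  \big[minn/#|sr_vertices m n|]_(D : {set sr_vec m n} | sr_dominating D) #|D|.

(* Main.v *)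
Require Import Defs.
From mathcomp Require Import all_boot zify ring.

Lemma card_bigcup_le (I T : finType) (P : pred I) (F : I -> {set T}) :
  #|\bigcup_(i | P i) F i| <= \sum_(i | P i) #|F i|.
Proof.
apply: (big_ind2 (fun (X : {set T}) s => #|X| <= s)) => //.
- by rewrite cards0.
- move=> X1 s1 X2 s2 h1 h2; apply: leq_trans (leq_card_setU X1 X2) _.
  exact: leq_add.
Qed.

Lemma eq_off (m n : nat) (a b : sr_vec m n) (j : 'I_m) :
  \sum_i (a i : nat) = \sum_i (b i : nat) -> (forall l, l != j -> a l = b l) -> a = b.
Proof.
move=> H E; apply/ffunP => l; case: (eqVneq l j) => [->|]; last exact: E.
move: H; rewrite (bigD1 j) //= [in RHS](bigD1 j) //=.
rewrite (eq_bigr (fun i => (b i : nat))) => [/addIn /val_inj //|i /E -> //].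
Qed.

Lemma nbhd_card (m n : nat) (i0 : 'I_m) (d : sr_vec m n) :
  #|[set v in sr_vertices m n | (v == d) || sr_adj d v]| <= m * m * n.+1.
Proof.
set S := fun p : 'I_m * 'I_m => [set v in sr_vertices m n |
   [forall l, (l != p.1) && (l != p.2) ==> (v l == d l)]].
have cS p : #|S p| <= n.+1.
  apply: leq_trans (@leq_card_in _ _ (fun v : sr_vec m n => v p.1) _ _) _; last by rewrite card_ord.
  move=> v w; rewrite !inE => /andP[vV /forallP vd] /andP[wV /forallP wd] e.
  apply: (@eq_off _ _ v w p.2); first by rewrite (eqP vV) (eqP wV).
  move=> l lj; case: (eqVneq l p.1) => [->//|li].
  by have:= vd l; have:= wd l; rewrite li lj /= => /eqP -> /eqP ->.
apply: (@leq_trans #|\bigcup_(p : 'I_m * 'I_m) S p|).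
  apply: subset_leq_card; apply/subsetP => v; rewrite inE => /andP[vV].
  case/orP => [/eqP vd|].
    apply/bigcupP; exists (i0, i0) => //; rewrite inE vV /= vd.
    by apply/forallP => l; apply/implyP => _.
  move/cards2P => [x [y [xy A]]].
  apply/bigcupP; exists (x, y) => //; rewrite inE vV /=.
  apply/forallP => l; apply/implyP => /andP[lx ly].
  have : l \notin [set x; y] by rewrite !inE negb_or lx ly.
  by rewrite -A inE negbK eq_sym.
apply: leq_trans (@card_bigcup_le _ _ _ S) _.
apply: (@leq_trans (\sum_(p : 'I_m * 'I_m) n.+1)); first by apply: leq_sum => p _; exact: cS.
by rewrite sum_nat_const card_prod card_ord.
Qed.

Lemma expn_mono a b e : a <= b -> a ^ e <= b ^ e.
Proof. by case: e => [//|e] h; rewrite leq_exp2r. Qed.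

Lemma bigmin_le (I : finType) (P : pred I) (F : I -> nat) x j :
  P j -> \big[minn/x]_(i | P i) F i <= F j.
Proof.
move=> Pj; have: j \in index_enum I by rewrite mem_index_enum.
elim: (index_enum I) => [//|a r IH]; rewrite inE big_cons.
case/orP => [/eqP <-|/IH h]; first by rewrite Pj geq_minl.
by case: (P a) => //; apply: leq_trans (geq_minr _ _) h.
Qed.

Lemma dom_lower m n (i0 : 'I_m) (D : {set sr_vec m n}) :
  sr_dominating D -> #|sr_vertices m n| <= #|D| * (m * m * n.+1).
Proof.
move/andP=> [_ /forallP H].
set N := fun d : sr_vec m n => [set v in sr_vertices m n | (v == d) || sr_adj d v].
apply: (@leq_trans #|\bigcup_(d in D) N d|).
  apply: subset_leq_card; apply/subsetP => v vV.
  have := H v; rewrite vV /= => /orP[vD|/existsP[d /andP[dD adj]]].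
    by apply/bigcupP; exists v => //; rewrite inE vV eqxx.
  by apply/bigcupP; exists d => //; rewrite inE vV adj orbT.
apply: leq_trans (@card_bigcup_le _ _ _ N) _.
apply: (@leq_trans (\sum_(d in D) (m * m * n.+1))); last by rewrite sum_nat_const.
by apply: leq_sum => d _; apply: nbhd_card.
Qed.

Lemma V_lower k n : (n %/ k.+1).+1 ^ k.+1 <= #|sr_vertices k.+2 n|.
Proof.
set q := n %/ k.+1.
have qn : q <= n by apply: leq_div.
have sn (f : {ffun 'I_k.+1 -> 'I_q.+1}) : \sum_i (f i : nat) <= n.
  apply: (@leq_trans (\sum_(i < k.+1) q)).
    by apply: leq_sum => i _; rewrite -ltnS.
  by rewrite sum_nat_const card_ord mulnC leq_divM.
pose g (f : {ffun 'I_k.+1 -> 'I_q.+1}) : sr_vec k.+2 n :=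
  [ffun l => if unlift ord0 l is Some i then inord (f i) else inord (n - \sum_i (f i : nat))].
have gi : injective g.
  move=> f1 f2 e; apply/ffunP => i; apply/val_inj.
  have := congr1 (fun a : sr_vec k.+2 n => a (lift ord0 i) : nat) e.
  rewrite /= !ffunE liftK !inordK //; rewrite ltnS.
  - by apply: leq_trans qn; rewrite -ltnS.
  - by apply: leq_trans qn; rewrite -ltnS.
have hc : #|{ffun 'I_k.+1 -> 'I_q.+1}| = q.+1 ^ k.+1 by rewrite card_ffun !card_ord.
rewrite -hc -(card_imset _ gi).
apply: subset_leq_card; apply/subsetP => _ /imsetP[f _ ->].
rewrite inE big_ord_recl !ffunE unlift_none inordK; last by rewrite ltnS leq_subr.
rewrite [X in _ + X](eq_bigr (fun i => (f i : nat))) => [|i _]; first by rewrite subnK ?sn.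
rewrite ffunE liftK inordK // ltnS; apply: leq_trans qn; rewrite -ltnS //.
Qed.

Lemma sum2 k n (a : sr_vec k.+2 n) :
  \sum_i (a i : nat) = a ord0 + a (lift ord0 ord0) + \sum_(i < k) a (lift ord0 (lift ord0 i)).
Proof. by rewrite !big_ord_recl addnA. Qed.

Lemma upper k n : sr_gamma k.+2 n <= n.+1 ^ k.
Proof.
set j1 : 'I_k.+2 := lift ord0 ord0.
set D0 := [set v in sr_vertices k.+2 n | (v ord0 : nat) == 0].
have domD : sr_dominating D0.
  apply/andP; split; first by apply/subsetP => v; rewrite inE => /andP[].
  apply/forallP => v; apply/implyP => vV.
  case: (eqVneq (v ord0 : nat) 0) => [v0|v0]; first by rewrite inE vV v0.
  apply/orP; right.
  have hs : v ord0 + v j1 <= n.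
    move: vV; rewrite inE sum2 => /eqP e.
    by have := leq_addr (\sum_(i < k) v (lift ord0 (lift ord0 i))) (v ord0 + v j1); rewrite e.
  pose d : sr_vec k.+2 n := [ffun i => if i == ord0 then (ord0 : 'I_n.+1)
     else if i == j1 then inord (v ord0 + v j1) else v i].
  have d0 : d ord0 = ord0 by rewrite ffunE eqxx.
  have d1 : (d j1 : nat) = v ord0 + v j1 by rewrite ffunE /= inordK.
  have dr i : d (lift ord0 (lift ord0 i)) = v (lift ord0 (lift ord0 i)) by rewrite ffunE.
  apply/existsP; exists d; apply/andP; split.
    rewrite inE; apply/andP; split; last by rewrite d0.
    rewrite inE sum2 d0 d1 /=; under eq_bigr => i _ do rewrite dr.
    by move: vV; rewrite inE sum2.
  rewrite /sr_adj; apply/eqP.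
  have -> : [set i | d i != v i] = [set ord0; j1].
    apply/setP => i; rewrite !inE.
    case: (unliftP ord0 i) => [i' ->|->]; last by rewrite d0 eqxx; apply/eqP => /(congr1 val) /= /esym /eqP; rewrite (negbTE v0).
    case: (unliftP ord0 i') => [i'' ->|->].
      by rewrite dr eqxx /=.
    rewrite eqxx orbT; apply/eqP => /(congr1 val); rewrite /= -/j1 d1.
    by move/(canRL (addnK _)); rewrite subnn => /eqP; rewrite (negbTE v0).
  by rewrite cards2.
apply: (leq_trans (@bigmin_le _ (@sr_dominating k.+2 n) (fun D => #|D|) _ D0 domD)).
pose h (v : sr_vec k.+2 n) : {ffun 'I_k -> 'I_n.+1} := [ffun i => v (lift ord0 (lift ord0 i))].
apply: leq_trans (@leq_card_in _ _ h D0 _) _; last by rewrite card_ffun !card_ord.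
move=> v w; rewrite !inE => /andP[vV v0] /andP[wV w0] e.
apply: (@eq_off _ _ v w j1); first by rewrite (eqP vV) (eqP wV).
move=> l; case: (unliftP ord0 l) => [l' ->|->]; last by move=> _; apply/val_inj; rewrite /= (eqP v0) (eqP w0).
case: (unliftP ord0 l') => [l'' -> _|->]; last by rewrite eqxx.
by move/ffunP: e => /(_ l''); rewrite !ffunE.
Qed.

Lemma lowerD k n (D : {set sr_vec k.+2 n}) : sr_dominating D -> 0 < n ->
  n ^ k <= (2 * k.+1 ^ k.+1 * (k.+2 * k.+2)) * #|D|.
Proof.
move=> dD n0.
have h1 := @dom_lower _ _ ord0 D dD.
have h2 := V_lower k n.
have h3 : n ^ k.+1 <= (n %/ k.+1).+1 ^ k.+1 * k.+1 ^ k.+1.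
  by rewrite -expnMn expn_mono // ltnW // ltn_ceil.
have h4 := leq_trans h3 (leq_mul (leq_trans h2 h1) (leqnn (k.+1 ^ k.+1))).
rewrite -(leq_pmul2l n0) -expnS; apply: leq_trans h4 _.
set A := k.+1 ^ k.+1; set K := k.+2; set d := #|D|.
have -> : d * (K * K * n.+1) * A = n.+1 * (A * (K * K) * d) by ring.
have -> : n * (2 * A * (K * K) * d) = (2 * n) * (A * (K * K) * d) by ring.
by apply: leq_mul => //; lia.
Qed.

Theorem theorem2 (m : nat) (hm : 2 <= m) :
  exists (c C N : nat), 0 < c /\ 0 < C /\
    forall n : nat, N <= n ->
      n ^ (m - 2) <= c * sr_gamma m n /\ sr_gamma m n <= C * n ^ (m - 2).
Proof.
case: m hm => [|[|k]] // _.
have -> : k.+2 - 2 = k by rewrite subn2.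
exists (2 * k.+1 ^ k.+1 * (k.+2 * k.+2)), (2 ^ k), 1.
split; first by rewrite !muln_gt0 !expn_gt0.
split; first by rewrite expn_gt0.
move=> n n0; split.
  rewrite /sr_gamma; apply: (big_ind (fun g => n ^ k <= _ * g)).
  - apply: lowerD => //; apply/andP; split => //.
    by apply/forallP => v; apply/implyP => ->.
  - by move=> x y hx hy; rewrite /minn; case: ltnP.
  - by move=> D dD; apply: lowerD.
apply: leq_trans (upper k n) _.
by rewrite -expnMn expn_mono //; lia.
Qed.
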